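(* Let $H\in(0,1)$ and let $B^H=\{B^H(t):t\in[0,1]\}$ be a fractional Brownian motion with Hurst index $H$. Fix $\delta\in(0,H)$ and set $\ell_k=2^{-(H-\delta)k}$. For $\nu>0$ let $K(\nu)=\sup\{n\ge 1: 4\sqrt{n}>\nu\cdot 2^{\delta n}\}$. Then for any constants $\nu,\nu^*>0$, with $\rho=2(\nu+\nu^* )$, for all $k>K(\nu)$, $$\mathbb{P}\bigl(\|B^H_k-B^H_{k-1}\|_\infty\ge \rho\ell_k\bigr)=\mathbb{P}\Bigl(\max_{0\le j\le 2^{k-1}-1}|a^k_j-b^k_j|\ge \rho\ell_k\Bigr)\le 2\exp\bigl\{-(\nu^* )^2\cdot 2^{2k\delta-2}\bigr\}.$$
   Context: A fractional Brownian motion with Hurst index $H$ is a centered Gaussian process with $B^H(0)=0$ and covariance $\mathbb{E}[B^H(s)B^H(t)]=\tfrac12(|s|^{2H}+|t|^{2H}-|s-t|^{2H})$, taken with continuous sample paths. For $n\ge0$ let $t^n_i=i/2^n$, $i=0,\dots,2^n$, and $D_n=\{t^n_0,\dots,t^n_{2^n}\}$. $B^H_n$ denotes the continuous function on $[0,1]$ obtained by linear interpolation of the values $B^H(t^n_i)$, $i=0,\dots,2^n$ (the dyadic discretization of level $n$); $B^H_{-1}\equiv 0$. For $k\ge1$ and $j=0,\dots,2^{k-1}-1$: $a^k_j=B^H(t^k_{2j+1})$ and $b^k_j=\tfrac12\bigl(B^H(t^{k-1}_j)+B^H(t^{k-1}_{j+1})\bigr)$. $\|u\|_\infty=\sup_{t\in[0,1]}|u(t)|$.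 *)

(* Defs.v *)
From HB Require Import structures.
From mathcomp Require Import all_boot all_order all_algebra.
From mathcomp Require Import all_classical all_reals all_analysis.
Set Implicit Arguments. Unset Strict Implicit. Unset Printing Implicit Defensive.
Import Order.TTheory GRing.Theory Num.Theory numFieldNormedType.Exports.
Local Open Scope classical_set_scope.
Local Open Scope ring_scope.

Definition gaussian_law {R : realType} (v : R) : set R -> \bar R :=
  if v == 0 then \d_(0:R) else normal_prob 0 (Num.sqrt v).

Definition fbm_cov {R : realType} (H s t : R) : R :=
  (powR `|s| (2 * H) + powR `|t| (2 * H) - powR `|s - t| (2 * H)) / 2.

Definition is_fBm {R : realType} d (T : measurableType d) (P : probability T R)
    (H : R) (B : R -> T -> R) : Prop :=
  [/\ forall w, B 0 w = 0,
      forall t, t \in `[0, 1] -> measurable_fun setT (B t),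
      forall (n : nat) (c ts : 'I_n -> R),
        (forall i, ts i \in `[0, 1]) ->
        forall A : set R, measurable A ->
          P [set w | \sum_(i < n) c i * B (ts i) w \in A] =
          gaussian_law (\sum_(i < n) \sum_(j < n) c i * c j * fbm_cov H (ts i) (ts j)) A
    & forall w, {within `[(0:R), 1], continuous (fun t => B t w)}].

Definition dyadic {R : realType} (n i : nat) : R := i%:R / 2 ^+ n.

(* B_n: linear interpolation of the values B(t^n_i), i = 0..2^n. *)
Definition dyadic_interp {R : realType} T (B : R -> T -> R) (n : nat) (w : T) (t : R) : R :=
  let i := minn (Num.truncn (t * 2 ^+ n)) (2 ^ n).-1 in
  B (dyadic n i) w + (t * 2 ^+ n - i%:R) * (B (dyadic n i.+1) w - B (dyadic n i) w).

Definition sup_norm01 {R : realType} (u : R -> R) : R :=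
  sup [set `|u t| | t in `[(0:R), 1]].

Definition coef_a {R : realType} T (B : R -> T -> R) (k j : nat) (w : T) : R :=
  B (dyadic k (2 * j).+1) w.
Definition coef_b {R : realType} T (B : R -> T -> R) (k j : nat) (w : T) : R :=
  (B (dyadic k.-1 j) w + B (dyadic k.-1 j.+1) w) / 2.

(* Main.v *)
Require Import Defs.
From HB Require Import structures.
From mathcomp Require Import all_boot all_order all_algebra.
From mathcomp Require Import all_classical all_reals all_analysis.
From mathcomp Require Import ring lra zify measurable_realfun.
Import Order.TTheory GRing.Theory Num.Theory numFieldNormedType.Exports.
Local Open Scope classical_set_scope.
Local Open Scope ring_scope.

Lemma interp_any (R : realType) T (B : R -> T -> R) (n : nat) (w : T) (t : R) (i : nat) :
  (i < 2 ^ n)%N -> i%:R <= t * 2 ^+ n <= i.+1%:R ->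
  dyadic_interp B n w t =
  B (dyadic n i) w + (t * 2 ^+ n - i%:R) * (B (dyadic n i.+1) w - B (dyadic n i) w).
Proof.
move=> iN /andP[h1 h2]; rewrite /dyadic_interp; cbv zeta.
set u := t * 2 ^+ n in h1 h2 *.
have u0 : 0 <= u by apply: le_trans h1.
have t1 : (i <= Num.truncn u)%N by rewrite truncn_ge_nat.
have t2 : (Num.truncn u <= i.+1)%N.
  by rewrite truncn_le_nat; apply: (le_lt_trans h2); rewrite ltr_nat.
have [->|ne] := eqVneq (Num.truncn u) i.
  by rewrite (minn_idPl _) //; rewrite -ltnS prednK ?expn_gt0.
have tr : Num.truncn u = i.+1 by lia.
have ue : u = i.+1%:R.
  apply/eqP; rewrite eq_le h2 /=; rewrite -truncn_ge_nat // tr //.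
rewrite tr; have [lt|ge] := ltnP i.+1 (2 ^ n).-1.+1.
  rewrite (minn_idPl _); last by rewrite -ltnS.
  rewrite ue subrr mul0r addr0 -natrB // subSnn mul1r; ring.
have -> : minn i.+1 (2 ^ n).-1 = i.
  have := iN; rewrite -[(2 ^ n)%N]prednK ?expn_gt0 // => iN'. lia.
by [].
Qed.

Lemma exists_index (R : realType) (n : nat) (u : R) :
  0 <= u <= (2 ^ n)%:R -> exists i : nat, (i < 2 ^ n)%N /\ i%:R <= u <= i.+1%:R.
Proof.
move=> /andP[u0 uN].
have [lt|ge] := ltnP (Num.truncn u) (2 ^ n).
  exists (Num.truncn u); split => //.
  have /andP[a b] := truncn_itv u0; by rewrite a ltW.
exists (2 ^ n).-1; split; first by rewrite prednK ?expn_gt0.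
have ue : u = (2 ^ n)%:R.
  apply/eqP; rewrite eq_le uN /= -truncn_ge_nat //.
rewrite prednK ?expn_gt0 // ue lexx andbT ler_nat; lia.
Qed.

Lemma natrS (R : realType) (n : nat) : n.+1%:R = n%:R + 1 :> R. Proof. by rewrite natr1. Qed.
Lemma dyadic2 (R : realType) (k m : nat) : dyadic k.+1 (2 * m) = dyadic k m :> R.
Proof.
rewrite /dyadic natrM exprS; field.
by rewrite expf_neq0.
Qed.

Lemma diff_repr (R : realType) T (B : R -> T -> R) (k : nat) (w : T) (t : R) :
  0 <= t <= 1 -> exists j : nat, (j < 2 ^ k)%N /\ exists s : R, 0 <= s <= 1 /\
  dyadic_interp B k.+1 w t - dyadic_interp B k w t =
    s * (coef_a B k.+1 j w - coef_b B k.+1 j w).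
Proof.
move=> /andP[t0 t1].
have p0 : 0 < 2 ^+ k :> R by rewrite exprn_gt0.
have u0 : 0 <= t * 2 ^+ k.+1 <= (2 ^ k.+1)%:R.
  rewrite natrX mulr_ge0 ?exprn_ge0 //=.
  by rewrite -[leRHS]mul1r ler_wpM2r ?exprn_ge0.
have [i [iN /andP[h1 h2]]] := @exists_index _ _ _ u0.
set j := i./2.
have e : i = (odd i + j.*2)%N by rewrite odd_double_half.
rewrite -muln2 in e.
have jN : (j < 2 ^ k)%N by rewrite expnS in iN; lia.
have eu : t * 2 ^+ k.+1 = 2 * (t * 2 ^+ k) by rewrite exprS mulrCA.
rewrite /coef_a /coef_b /=.
exists j; split => //.
move: e; case: (odd i) => /= e.
- have ei : i = (2 * j).+1 by lia.
  rewrite ei in h1 h2.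
  have c1 : ((2 * j).+1%:R <= t * 2 ^+ k.+1 <= (2 * j).+2%:R) by rewrite h1 h2.
  have c2 : (j%:R <= t * 2 ^+ k <= j.+1%:R).
    rewrite eu in h1 h2; rewrite !(@natrS R) natrM in h1 h2.
    apply/andP; split; rewrite ?(@natrS R); lra.
  have iN' : ((2 * j).+1 < 2 ^ k.+1)%N by rewrite -ei.
  rewrite (@interp_any _ _ B _ w t (2 * j).+1 iN' c1).
  rewrite (@interp_any _ _ B _ w t j jN c2).
  have -> : ((2 * j).+2 = 2 * j.+1)%N by lia.
  rewrite dyadic2.
  exists (2 * j.+1%:R - t * 2 ^+ k.+1); split.
    rewrite eu; rewrite eu !(@natrS R) natrM in h1 h2; rewrite (@natrS R); apply/andP; split; lra.
  rewrite eu !(@natrS R) natrM; by field.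
- have ei : i = (2 * j)%N by lia.
  rewrite ei in h1 h2.
  have c1 : (((2 * j)%N)%:R <= t * 2 ^+ k.+1 <= (2 * j).+1%:R) by rewrite h1 h2.
  have c2 : (j%:R <= t * 2 ^+ k <= j.+1%:R).
    rewrite eu in h1 h2; rewrite !(@natrS R) natrM in h1 h2.
    apply/andP; split; rewrite ?(@natrS R); lra.
  have iN' : ((2 * j) < 2 ^ k.+1)%N by rewrite -ei.
  rewrite (@interp_any _ _ B _ w t (2 * j) iN' c1).
  rewrite (@interp_any _ _ B _ w t j jN c2).
  rewrite dyadic2.
  exists (t * 2 ^+ k.+1 - 2 * j%:R); split.
    rewrite eu; rewrite eu !(@natrS R) natrM in h1 h2; apply/andP; split; lra.
  rewrite eu !(@natrS R) natrM; by field.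
Qed.

Lemma diff_at (R : realType) T (B : R -> T -> R) (k : nat) (w : T) (j : nat) :
  (j < 2 ^ k)%N ->
  dyadic_interp B k.+1 w (dyadic k.+1 (2 * j).+1) - dyadic_interp B k w (dyadic k.+1 (2 * j).+1) =
    coef_a B k.+1 j w - coef_b B k.+1 j w.
Proof.
move=> jN.
have p0 : 2 ^+ k != 0 :> R by rewrite expf_neq0.
have e1 : dyadic k.+1 (2 * j).+1 * 2 ^+ k.+1 = (2 * j).+1%:R :> R.
  by rewrite /dyadic divfK // expf_neq0.
have e2 : dyadic k.+1 (2 * j).+1 * 2 ^+ k = j%:R + 2^-1 :> R.
  rewrite /dyadic exprS !(@natrS R) natrM; field; rewrite add0r; exact: p0.
have hh : (0 <= (2:R)^-1) && ((2:R)^-1 <= 1).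
  by apply/andP; split; [rewrite invr_ge0 ler0n | rewrite invf_le1 ?ler1n ?ltr0n].
have c1 : ((2 * j)%N%:R <= (dyadic k.+1 (2 * j).+1 : R) * 2 ^+ k.+1 <= (2 * j).+1%:R).
  by rewrite e1 lexx ler_nat leqnSn.
have c2 : (j%:R <= (dyadic k.+1 (2 * j).+1 : R) * 2 ^+ k <= j.+1%:R).
  move/andP: hh => [hh1 hh2]; by rewrite e2 (@natrS R j); apply/andP; split; lra.
have iN' : ((2 * j) < 2 ^ k.+1)%N by rewrite expnS; lia.
rewrite (@interp_any _ _ B _ w _ (2 * j) iN' c1).
rewrite (@interp_any _ _ B _ w _ j jN c2).
rewrite e1 e2 dyadic2 /coef_a /coef_b /= !(@natrS R) natrM; by field.
Qed.

Lemma supnorm_eq (R : realType) T (B : R -> T -> R) (k : nat) (w : T) :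
  (1 <= k)%N ->
  sup_norm01 (fun t => dyadic_interp B k w t - dyadic_interp B k.-1 w t)
  = \big[Num.max/0]_(j < 2 ^ k.-1) `|coef_a B k j w - coef_b B k j w|.
Proof.
case: k => [//|k] _ /=.
rewrite /sup_norm01.
set u := (fun t => dyadic_interp B k.+1 w t - dyadic_interp B k w t).
set S := [set _ | _ in _].
set M := \big[Num.max/0]_(j < 2 ^ k) _.
have M0 : 0 <= M by apply: bigmax_ge_id.
have ubM : ubound S M.
  move=> y [t tI <-].
  have tI' : 0 <= t <= 1 by have : t \in `[0, 1] := tI; rewrite in_itv.
  have [j [jN [s [/andP[s0 s1] ->]]]] := @diff_repr _ _ B k w t tI'.
  rewrite normrM (ger0_norm s0).
  apply: (le_trans (y := `|coef_a B k.+1 j w - coef_b B k.+1 j w|)).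
    by rewrite ler_piMl.
  exact: (bigmax_sup (Ordinal jN)).
have S0 : S `|u 0| by exists 0 => //=; rewrite in_itv /= lexx ler01.
apply/eqP; rewrite eq_le; apply/andP; split.
  by apply: ge_sup => //; exists `|u 0|.
apply: bigmax_le.
  apply: le_trans (normr_ge0 (u 0)) _.
  by apply: ub_le_sup => //; exists M.
move=> j _.
have jN : (j < 2 ^ k)%N by [].
rewrite -(@diff_at _ _ B k w j jN).
apply: ub_le_sup; first by exists M.
exists (dyadic k.+1 (2 * j).+1) => //.
rewrite /= in_itv /= /dyadic divr_ge0 ?ler0n ?exprn_ge0 //=.
rewrite ler_pdivrMr ?exprn_gt0 // mul1r -natrX ler_nat expnS; lia.
Qed.

Lemma pdf_bound (R : realType) (s x y : R) : 0 < s -> 0 <= x -> x <= `|y| ->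
  normal_pdf 0 s y <= 2 * expR (- (x ^+ 2 / (4 * s ^+ 2))) * normal_pdf 0 (2 * s) y.
Proof.
move=> s0 x0 xy.
have s0' : s != 0 by rewrite gt_eqF.
have s20 : 2 * s != 0 by rewrite mulf_neq0 // pnatr_eq0.
rewrite /normal_pdf (negbTE s0') (negbTE s20) /=.
have pk : normal_peak (2 * s) = normal_peak s / 2.
  rewrite /normal_peak exprMn.
  have -> : 2 ^+ 2 * s ^+ 2 * pi *+ 2 = 2 ^+ 2 * (s ^+ 2 * pi *+ 2) :> R.
    by rewrite mulrnAr mulrA.
  rewrite sqrtrM ?exprn_ge0 ?ler0n // sqrtr_sqr ger0_norm ?ler0n // invfM.
  exact: mulrC.
rewrite pk /normal_fun !subr0.
have q0 : 0 < s ^+ 2 by rewrite exprn_gt0.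
set q := s ^+ 2 in q0 *.
have pk0 : 0 <= normal_peak s by apply: normal_peak_ge0.
set p := normal_peak s in pk0 *.
rewrite exprMn.
have -> : 2 * expR (- (x ^+ 2 / (4 * q))) * (p / 2 * expR (- y ^+ 2 / (2 ^+ 2 * q *+ 2)))
   = p * expR (- (x ^+ 2 / (4 * q)) + - y ^+ 2 / (2 ^+ 2 * q *+ 2)).
  by rewrite expRD; field.
apply: ler_wpM2l => //; rewrite ler_expR.
have xy2 : x ^+ 2 <= y ^+ 2.
  by rewrite -[y ^+ 2]real_normK ?num_real // lerXn2r ?nnegrE.
have key : - (x ^+ 2 / (4 * q)) + - y ^+ 2 / (2 ^+ 2 * q *+ 2) - (- y ^+ 2 / (q *+ 2))
   = (3 * y ^+ 2 - 2 * x ^+ 2) / (8 * q).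
  rewrite -[q *+ 2]mulr_natr -[2 ^+ 2 * q *+ 2]mulr_natr; field; by rewrite gt_eqF.
rewrite -subr_ge0 key divr_ge0 //; last by rewrite mulr_ge0 // ltW.
have : 0 <= y ^+ 2 by rewrite sqr_ge0.
lra.
Qed.

Lemma normA_measurable (R : realType) (x : R) :
  measurable [set y : R | x <= `|y|].
Proof.
have -> : [set y : R | x <= `|y|] = setT `&` (Num.norm @^-1` `[x, +oo[%classic).
  apply/seteqP; split => y /=.
    by move=> h; split => //; rewrite /= in_itv /= andbT.
  by move=> [_]; rewrite /= in_itv /= andbT.
exact: (@normr_measurable R setT measurableT _ (measurable_itv _)).
Qed.

Lemma gauss_tail (R : realType) (v x : R) : 0 < v -> 0 <= x ->
  (gaussian_law v [set y | (x <= `|y|)%R] <= (2 * expR (- (x ^+ 2 / (4 * v))))%:E)%E.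
Proof.
move=> v0 x0.
rewrite /gaussian_law (negbTE (lt0r_neq0 v0)).
have s0 : 0 < Num.sqrt v by rewrite sqrtr_gt0.
have vE : v = Num.sqrt v ^+ 2 by rewrite sqr_sqrtr // ltW.
set s := Num.sqrt v in s0 vE *.
rewrite vE.
set A := [set y | x <= `|y|].
have mA : measurable A := @normA_measurable R x.
set c := 2 * expR (- (x ^+ 2 / (4 * s ^+ 2))).
have c0 : 0 <= c by rewrite mulr_ge0 ?expR_ge0.
rewrite /normal_prob.
apply: (@le_trans _ _ (\int[lebesgue_measure]_(y in A) (c%:E * (normal_pdf 0 (2 * s) y)%:E))%E).
  apply: ge0_le_integral => //.
  - by move=> y _; rewrite lee_fin normal_pdf_ge0.
  - have h : measurable_fun [set: R] (EFin \o normal_pdf 0 s).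
      by apply/measurable_EFinP; exact: measurable_normal_pdf.
    exact: (measurable_funTS h).
  - have h : measurable_fun [set: R] (EFin \o (fun y => c * normal_pdf 0 (2 * s) y)).
      apply/measurable_EFinP/measurable_funM => //.
      exact: measurable_normal_pdf.
    exact: (measurable_funTS h).
  - move=> y Ay; rewrite -EFinM lee_fin; apply: pdf_bound => //.
rewrite ge0_integralZl //; last first.
  by move=> y _; rewrite lee_fin normal_pdf_ge0.
  have h : measurable_fun [set: R] (EFin \o normal_pdf 0 (2 * s)).
    by apply/measurable_EFinP; exact: measurable_normal_pdf.
  exact: (measurable_funTS h).
apply: (@le_trans _ _ (c%:E * 1)%E); last by rewrite mule1.
apply: lee_wpmul2l; first by rewrite lee_fin.
exact: (probability_le1 (normal_prob 0 (2 * s)) mA).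
Qed.

Definition c3 {R : realType} (i : 'I_3) : R := nth 0 [:: 1; - 2^-1; - 2^-1] i.
Definition ts3 {R : realType} (a b e : R) (i : 'I_3) : R := nth 0 [:: a; b; e] i.

Lemma sum3 (R : realType) (f : 'I_3 -> R) :
  \sum_(i < 3) f i = f (Ordinal (isT : (0 < 3)%N)) + f (Ordinal (isT : (1 < 3)%N)) + f (Ordinal (isT : (2 < 3)%N)).
Proof.
rewrite !big_ord_recr big_ord0 /= add0r.
congr (f _ + f _ + f _); exact: val_inj.
Qed.

Lemma var3 (R : realType) (H p h : R) : 0 < H -> 0 <= p -> 0 < h ->
  \sum_(i < 3) \sum_(j < 3) c3 i * c3 j * fbm_cov H (ts3 (p + h) p (p + 2 * h) i) (ts3 (p + h) p (p + 2 * h) j)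
  = powR h (2 * H) - powR (2 * h) (2 * H) / 4.
Proof.
move=> H0 p0 h0.
rewrite !sum3 /c3 /ts3 /fbm_cov /=.
have z : powR 0 (2 * H) = 0 :> R by rewrite powR0 // mulf_neq0 // ?pnatr_eq0 // gt_eqF.
have e1 : `|p + h - p| = h.
  have -> : p + h - p = h by ring.
  by rewrite gtr0_norm.
have e2 : `|p - (p + h)| = h.
  have -> : p - (p + h) = - h by ring.
  by rewrite normrN gtr0_norm.
have e3 : `|p + h - (p + 2 * h)| = h.
  have -> : p + h - (p + 2 * h) = - h by ring.
  by rewrite normrN gtr0_norm.
have e4 : `|p + 2 * h - (p + h)| = h.
  have -> : p + 2 * h - (p + h) = h by ring.
  by rewrite gtr0_norm.
have e5 : `|p - (p + 2 * h)| = 2 * h.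
  have -> : p - (p + 2 * h) = - (2 * h) by ring.
  by rewrite normrN gtr0_norm // mulr_gt0.
have e6 : `|p + 2 * h - p| = 2 * h.
  have -> : p + 2 * h - p = 2 * h by ring.
  by rewrite gtr0_norm // mulr_gt0.
rewrite !subrr normr0 z e1 e2 e3 e4 e5 e6.
by field.
Qed.

Lemma p2D (R : realType) (a b : R) : powR 2 (a + b) = powR 2 a * powR 2 b.
Proof. by rewrite powRD // pnatr_eq0 implybT. Qed.

Lemma p2sq (R : realType) (a : R) : powR 2 a ^+ 2 = powR 2 (a + a).
Proof. by rewrite p2D expr2. Qed.

Lemma dyadic_in01 (R : realType) (n i : nat) : (i <= 2 ^ n)%N -> (dyadic n i : R) \in `[0, 1].
Proof.
move=> h; rewrite in_itv /= /dyadic divr_ge0 ?ler0n ?exprn_ge0 //=.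
by rewrite ler_pdivrMr ?exprn_gt0 // mul1r -natrX ler_nat.
Qed.

Lemma natl1 (j k : nat) : (j < 2 ^ k)%N -> ((2 * j).+1 <= 2 ^ k.+1)%N.
Proof. rewrite expnS; lia. Qed.
Lemma natl1' (j k : nat) : (j < 2 ^ k)%N -> ((2 * j).+1 < 2 ^ k.+1)%N.
Proof. rewrite expnS; lia. Qed.
Lemma natl2 (j k : nat) : (j < 2 ^ k)%N -> (j <= 2 ^ k)%N.
Proof. lia. Qed.

Theorem theorem1 (R : realType) (d : measure_display) (T : measurableType d)
  (P : probability T R) (H : R) (B : R -> T -> R) (delta nu nustar : R) (k : nat) :
  0 < H < 1 -> is_fBm P H B ->
  0 < delta < H -> 0 < nu -> 0 < nustar ->
  (* k > K(nu) := sup {n >= 1 : 4 sqrt n > nu 2^(delta n)} *)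
  (1 <= k)%N ->
  (forall n : nat, (1 <= n)%N -> nu * powR 2 (delta * n%:R) < 4 * Num.sqrt (n%:R) -> (n < k)%N) ->
  let rho := 2 * (nu + nustar) in
  let ell := powR 2 (- (H - delta) * k%:R) in
  P [set w | rho * ell <= sup_norm01 (fun t => dyadic_interp B k w t - dyadic_interp B k.-1 w t)]
  = P [set w | rho * ell <= \big[Num.max/0]_(j < 2 ^ k.-1) `|coef_a B k j w - coef_b B k j w|]
  /\
  (P [set w | (rho * ell <= \big[Num.max/0]_(j < 2 ^ k.-1) `|coef_a B k j w - coef_b B k j w|)%R]
   <= (2 * expR (- (nustar ^+ 2 * powR 2 (2 * k%:R * delta - 2))))%:E)%E.
Proof.
move=> /andP[H0 H1] fbm /andP[d0 dH] nu0 ns0 k1 hK rho ell.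
split.
  by congr (P _); apply/seteqP; split => w /=; rewrite supnorm_eq.
case: k k1 hK @rho @ell => [//|k] _ hK rho ell /=.
case: fbm => B0 Bmeas Bgauss Bcont.
set K : R := k.+1%:R.
set Z := powR 2 (delta * K).
have K0 : 0 <= K by rewrite ler0n.
have Z0 : 0 < Z by apply: powR_gt0.
have hypk : 4 * Num.sqrt K <= nu * Z.
  rewrite leNgt; apply/negP => h; have := hK k.+1 isT h; by rewrite ltnn.
have nuZ : 16 * K <= nu ^+ 2 * Z ^+ 2.
  have : (4 * Num.sqrt K) ^+ 2 <= (nu * Z) ^+ 2.
    by rewrite lerXn2r // nnegrE ?mulr_ge0 ?sqrtr_ge0 ?ler0n // ltW.
  by rewrite !exprMn sqr_sqrtr // -natrX.
have rho0 : 0 < rho by rewrite /rho mulr_gt0 // addr_gt0.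
have ell0 : 0 < ell by apply: powR_gt0.
set x := rho * ell.
have x0 : 0 < x by rewrite mulr_gt0.
set h : R := (2 ^+ k.+1)^-1.
have h0 : 0 < h by rewrite invr_gt0 exprn_gt0.
set hp := powR h (2 * H).
have hp0 : 0 < hp by apply: powR_gt0.
have ell2 : ell ^+ 2 = hp * Z ^+ 2.
  rewrite /hp.
  have -> : h = powR 2 (- K) by rewrite powR_invn.
  rewrite -powRrM /ell /Z !p2sq -p2D; congr (powR 2 _); ring.
have c2lt : powR 2 (2 * H) < 4.
  have : powR 2 (2 * H) < powR 2 2.
    rewrite /powR pnatr_eq0 /= ltr_expR ltr_pM2r ?ln_gt0 ?ltr1n //; lra.
  by rewrite powR_mulrn ?ler0n // expr2 -natrM.
have c20 : 0 < powR 2 (2 * H) by apply: powR_gt0.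
set S := (nu + nustar) ^+ 2 * Z ^+ 2.
pose X j w := coef_a B k.+1 j w - coef_b B k.+1 j w.
pose F (j : nat) := [set w | x <= `|X j w|].
have mF : forall j, (j < 2 ^ k)%N -> measurable (F j).
  move=> j jN.
  have mX : measurable_fun setT (X j).
    have i1 : (dyadic k.+1 (2 * j).+1 : R) \in `[0, 1] by apply: dyadic_in01; apply: natl1.
    have i2 : (dyadic k j : R) \in `[0, 1] by apply: dyadic_in01; apply: natl2.
    have i3 : (dyadic k j.+1 : R) \in `[0, 1] by apply: dyadic_in01.
    have m23 := measurable_funD (Bmeas _ i2) (Bmeas _ i3).
    have m23' := measurable_funM m23 (@measurable_cst _ _ T R setT (2^-1 : R)).
    exact: (measurable_funB (Bmeas _ i1) m23').
  rewrite -[F j]setTI.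
  exact: (mX measurableT _ (@normA_measurable R x)).
have key : forall j, (j < 2 ^ k)%N -> (P (F j) <= (2 * expR (- S))%:E)%E.
  move=> j jN.
  set t1 : R := dyadic k.+1 (2 * j).+1.
  set p : R := dyadic k j.
  set t3 : R := dyadic k j.+1.
  have p0 : 0 <= p by rewrite /p /dyadic divr_ge0 ?ler0n ?exprn_ge0.
  have et1 : t1 = p + h by rewrite /t1 /p /h /dyadic exprS (natrS R (2 * j)) natrM; field; rewrite expf_neq0.
  have et3 : t3 = p + 2 * h by rewrite /t3 /p /h /dyadic exprS (natrS R j); field; rewrite expf_neq0.
  have tsI : forall i, ts3 t1 p t3 i \in `[0, 1].
    case=> [[|[|[|//]]] hi] /=.
    - by apply: dyadic_in01; apply: natl1.
    - by apply: dyadic_in01; apply: natl2.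
    - by apply: dyadic_in01.
  have FE : F j = [set w | \sum_(i < 3) c3 i * B (ts3 t1 p t3 i) w \in [set y | x <= `|y|]].
    apply/seteqP; split => w /=; rewrite in_setE /= sum3 /c3 /ts3 /= /X /coef_a /coef_b /=;
      (have -> : 1 * B t1 w + - 2^-1 * B p w + - 2^-1 * B t3 w = B t1 w - (B p w + B t3 w) / 2 by field); by [].
  rewrite FE (Bgauss 3 c3 (ts3 t1 p t3) tsI _ (@normA_measurable R x)).
  rewrite et1 et3 var3 //.
  rewrite (powRM _ (ler0n _ 2) (ltW h0)) -/hp.
  set v := hp - powR 2 (2 * H) * hp / 4.
  have v0 : 0 < v.
    have -> : v = hp * (1 - powR 2 (2 * H) / 4) by rewrite /v; field.
    apply: mulr_gt0 => //; lra.
  have vle : v <= hp.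
    rewrite /v; have : 0 <= powR 2 (2 * H) * hp / 4 by rewrite divr_ge0 ?mulr_ge0 ?ltW.
    lra.
  apply: le_trans (@gauss_tail R v x v0 (ltW x0)) _.
  rewrite lee_fin ler_pM2l // ler_expR lerN2.
  rewrite ler_pdivlMr ?mulr_gt0 //.
  have -> : x ^+ 2 = rho ^+ 2 * (hp * Z ^+ 2) by rewrite /x exprMn ell2.
  have : 0 <= (nu + nustar) ^+ 2 * Z ^+ 2 by rewrite mulr_ge0 ?sqr_ge0.
  rewrite /S /rho; nra.
have EU : [set w | x <= \big[Num.max/0]_(j < 2 ^ k) `|X j w|] = \big[setU/set0]_(j < 2 ^ k) F j.
  rewrite -bigcup_mkord; apply/seteqP; split => w /=.
    move=> hw.
    case: (pselect (exists j : 'I_(2 ^ k), x <= `|X j w|)) => [[j hj]|nj].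
      by exists j => //=.
    have : \big[Num.max/0]_(j < 2 ^ k) `|X j w| < x.
      apply/bigmax_ltP; split => // i _; rewrite ltNge; apply/negP => hi; apply: nj; by exists i.
    by rewrite ltNge hw.
  move=> [j /= jn Fj]; apply: le_trans Fj _.
  exact: (bigmax_sup (Ordinal jn)).
rewrite EU.
have mU : measurable (\big[setU/set0]_(j < 2 ^ k) F j).
  by apply: bigsetU_measurable => i _; apply: mF.
apply: le_trans (content_subadditive P (fun i hi => mF i hi) mU (@subset_refl _ _)) _.
apply: le_trans (lee_sum _ (fun (i : 'I_(2 ^ k)) _ => key i (ltn_ord i))) _.
rewrite sumEFin sumr_const card_ord lee_fin.
have e4 : powR 2 (2 * K * delta - 2) = Z ^+ 2 / 4.
  rewrite (_ : 2 * K * delta - 2 = delta * K + delta * K + - 2%:R); last by ring.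
  have four : (2:R) ^+ 2 = 4 by rewrite expr2 -natrM.
  by rewrite (@p2D R (delta * K + delta * K)) -p2sq powR_invn // -/Z four.
rewrite e4.
have e2k : 2 ^+ k <= expR (nu ^+ 2 * Z ^+ 2) :> R.
  apply: (@le_trans _ _ (expR 1 ^+ k)).
    apply: lerXn2r; rewrite ?nnegrE ?expR_ge0 ?ler0n //.
    by have := expR_ge1Dx (1 : R); rewrite (_ : 1 + 1 = 2 :> R) //.
  rewrite -expRM_natl mulr1 ler_expR.
  apply: le_trans nuZ; rewrite /K natrS; lra.
rewrite -(mulr_natr (2 * expR (- S)) (2 ^ k)) natrX.
apply: (@le_trans _ _ (2 * expR (- S) * expR (nu ^+ 2 * Z ^+ 2))).
  by apply: ler_wpM2l => //; rewrite mulr_ge0 ?expR_ge0.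
rewrite -mulrA -expRD ler_pM2l // ler_expR.
have : 0 <= nu * nustar * Z ^+ 2 by rewrite !mulr_ge0 ?sqr_ge0 ?ltW.
have : 0 <= nustar ^+ 2 * Z ^+ 2 by rewrite !mulr_ge0 ?sqr_ge0 ?ltW.
rewrite /S; nra.
Qed.
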